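(* Let $\mathcal{H}_O\simeq\mathbb{C}^{d_O}$ and $\mathcal{H}_K\simeq\mathbb{C}^{d_K}$, let $H=\sum_{n=1}^{d_Od_K}\lambda_n^{\uparrow}|\xi_n\rangle\langle\xi_n|$ be a Hamiltonian on $\mathcal{H}_O\otimes\mathcal{H}_K$ with $\lambda_1^\uparrow\leqslant\dots\leqslant\lambda^\uparrow_{d_Od_K}$ and $\{|\xi_n\rangle\}$ an orthonormal eigenbasis, let $\beta\in(0,\infty)$ and $\rho(\beta)=e^{-\beta H}/\mathrm{tr}[e^{-\beta H}]=\sum_n p_n^{\downarrow}|\xi_n\rangle\langle\xi_n|$. Fix a unit vector $|\Psi\rangle\in\mathcal{H}_O$. Let $\mathcal{U}_{\mathrm{maj}}$ be the set of unitaries $U$ on $\mathcal{H}_O\otimes\mathcal{H}_K$ for which there is an orthonormal basis $\{|\phi_j\rangle\}_{j=1}^{d_K}$ of $\mathcal{H}_K$ with $U|\xi_n\rangle=|\Psi\rangle\otimes|\phi_n\rangle$ for all $n\in\{1,\dots,d_K\}$ (these unitaries maximise $\langle\Psi|\mathrm{tr}_K[U\rho(\beta)U^\dagger]|\Psi\rangle$). For a unitary $U$ define $\Delta Q(U)=\mathrm{tr}[H(U\rho(\beta)U^\dagger-\rho(\beta))]$ and the vector $\mathbf{q}^U\in\mathbb{R}^{d_Od_K}$ by $q_n^U=\sum_{m=1}^{d_Od_K}p_m^{\downarrow}|\langle\xi_n|U|\xi_m\rangle|^2$. Suppose $U^1\in\mathcal{U}_{\mathrm{maj}}$ satisfies $q_1^{U^1}\geqslant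 q_2^{U^1}\geqslant\dots\geqslant q^{U^1}_{d_Od_K}$ and $(\mathbf{q}^{U})^{\downarrow}\prec(\mathbf{q}^{U^1})^{\downarrow}$ for all $U\in\mathcal{U}_{\mathrm{maj}}$. Then $\Delta Q(U^1)\leqslant\Delta Q(U)$ for all $U\in\mathcal{U}_{\mathrm{maj}}$.
   Context: $\mathrm{tr}_K$ denotes the partial trace over $\mathcal{H}_K$. For $\mathbf{a}\in\mathbb{R}^N$, $\mathbf{a}^\downarrow$ is its non-increasing rearrangement, and $\mathbf{a}\prec\mathbf{b}$ means $\sum_{i=1}^k a_i^\downarrow\leqslant\sum_{i=1}^k b_i^\downarrow$ for all $k$ with equality at $k=N$. *)

(* Defs.v *)
From HB Require Import structures.
From mathcomp Require Import all_boot all_order all_algebra.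
From mathcomp Require Import reals sequences.
From mathcomp Require Import complex spectral.
Set Implicit Arguments. Unset Strict Implicit. Unset Printing Implicit Defensive.
Import Order.TTheory GRing.Theory Num.Theory Num.Def.
Local Open Scope ring_scope.
Local Open Scope sesquilinear_scope.

Section QDefs.
Variable R : realType.
Local Notation C := R[i].

(* Vectors of C^n are stored as row vectors v; the ket |v> is the column
   vector v^T and the bra <v| is the row vector of complex conjugates. *)
Definition ket n (v : 'rV[C]_n) : 'cV[C]_n := v^T.
Definition bra n (v : 'rV[C]_n) : 'rV[C]_n := map_mx conjC v.

(* Tensor product C^m (x) C^n = C^(m*n), with basis vector e_i (x) e_j
   identified with index mxvec_index i j: entry (mxvec_index i j) = x i * y j. *)
Definition tensv m n (x : 'rV[C]_m) (y : 'rV[C]_n) : 'rV[C]_(m * n) :=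
  mxvec (x^T *m y).

Definition ketbra n (v : 'rV[C]_n) : 'M[C]_n := ket v *m bra v.

Definition gibbs_p N (lam : 'I_N -> R) (beta : R) (n : 'I_N) : R :=
  expR (- (beta * lam n)) / \sum_(m < N) expR (- (beta * lam m)).

(* rho(beta) = e^{-beta H}/tr e^{-beta H}, for H = sum_n lam_n |xi_n><xi_n|
   (xi_n = row n of Xi), via the spectral decomposition:
   rho(beta) = sum_n p_n |xi_n><xi_n|. *)
Definition gibbs_state N (lam : 'I_N -> R) (Xi : 'M[C]_N) (beta : R) : 'M[C]_N :=
  \sum_(n < N) (gibbs_p lam beta n)%:C%C *: ketbra (row n Xi).

Definition DeltaQ N (H rho U : 'M[C]_N) : C :=
  \tr (H *m (U *m rho *m U ^t* - rho)).

Definition qvec N (p : 'I_N -> R) (Xi U : 'M[C]_N) (n : 'I_N) : R :=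
  \sum_(m < N) p m * (Normc.normc ((bra (row n Xi) *m U *m ket (row m Xi)) 0 0)) ^+ 2.

Definition decr N (a : 'I_N -> R) : seq R := sort >=%R [seq a i | i <- enum 'I_N].

Definition majorized N (a b : 'I_N -> R) : Prop :=
  (forall k, (k <= N)%N ->
     \sum_(x <- take k (decr a)) x <= \sum_(x <- take k (decr b)) x) /\
  \sum_(x <- decr a) x = \sum_(x <- decr b) x.

(* U_maj: unitaries U on H_O (x) H_K such that for some orthonormal basis
   {phi_j} (rows of a unitary Phi) of H_K, U|xi_n> = |Psi> (x) |phi_n> for
   all n in {1..d_K} (0-based: n < d_K). *)
Definition Umaj dO dK (Psi : 'rV[C]_dO) (Xi U : 'M[C]_(dO * dK)) : Prop :=
  U \is unitarymx /\
  exists Phi : 'M[C]_dK, Phi \is unitarymx /\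
    forall (n : 'I_(dO * dK)) (hn : (n < dK)%N),
      U *m ket (row n Xi) = ket (tensv Psi (row (Ordinal hn) Phi)).

End QDefs.

(* Main.v *)
Require Import Defs.
From HB Require Import structures.
From mathcomp Require Import all_boot all_order all_algebra.
From mathcomp Require Import reals sequences.
From mathcomp Require Import complex spectral.
Import Order.TTheory GRing.Theory Num.Theory.
Local Open Scope ring_scope.

Local Open Scope sesquilinear_scope.
Section Top.
Variable R : realType.
Let ge_trans : transitive (>=%R : rel R).
Proof. by move=> x y z hyx hzy; exact: le_trans hzy hyx. Qed.

Lemma aux_ins (a b : seq R) (x : R) k : sorted >=%R (a ++ x :: b) ->
  x + \sum_(y <- take k (a ++ b)) y <= \sum_(y <- take k.+1 (a ++ x :: b)) y.
Proof.
elim: a k => [|y a IH] k /=.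
  by move=> _; rewrite big_cons.
move=> hs; have hall := order_path_min ge_trans hs.
have hxy : x <= y.
  by move: hall => /allP /(_ x); rewrite mem_cat mem_head orbT => /(_ isT).
case: k => [|k] /=.
  by rewrite !big_cons take0 !big_nil !addr0.
rewrite !big_cons addrCA lerD2l; apply: IH.
exact: path_sorted hs.
Qed.

Lemma topk (s t : seq R) k : perm_eq s t -> sorted >=%R t ->
  \sum_(y <- take k s) y <= \sum_(y <- take k t) y.
Proof.
elim: s t k => [|x s IH] t k hp hs.
  by move: (perm_size hp) => /= /esym /size0nil ->.
case: k => [|k]; first by rewrite !take0 !big_nil.
have : x \in t by rewrite -(perm_mem hp) mem_head.
move=> xt; case: (splitPr xt) hp hs => a b hp hs.
have hp' : perm_eq s (a ++ b).
  by rewrite -(perm_cons x); apply: (perm_trans hp); rewrite (perm_catCA a [:: x] b).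
have hs' : sorted >=%R (a ++ b).
  apply: (subseq_sorted ge_trans _ hs).
  by rewrite cat_subseq // subseq_cons.
rewrite [take _ (x :: s)]/= big_cons; apply: (le_trans _ (aux_ins a b x k hs)).
rewrite lerD2l; exact: IH.

Qed.
End Top.

Section Abel.
Variable R : realType.
Lemma abel (l d : nat -> R) N :
  (forall i j, (i <= j < N)%N -> l i <= l j) ->
  (forall k, (k <= N)%N -> \sum_(0 <= i < k) d i <= 0) ->
  \sum_(0 <= i < N) d i = 0 ->
  0 <= \sum_(0 <= i < N) l i * d i.
Proof.
move=> hl hd h0.
suff H : forall n, (n <= N)%N ->
  l n.-1 * \sum_(0 <= i < n) d i <= \sum_(0 <= i < n) l i * d i.
  by have := H N (leqnn N); rewrite h0 mulr0.
elim=> [|n IH] hn; first by rewrite big_geq // big_geq // mulr0.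
rewrite !big_nat_recr //=.
have hn' : (n <= N)%N by apply: ltnW.
apply: le_trans (_ : l n * \sum_(0 <= i < n) d i + l n * d n <= _).
  by rewrite mulrDr.
rewrite lerD2r; apply: le_trans (IH hn').
have hD := hd n hn'.
have hln : l n.-1 <= l n by apply: hl; rewrite leq_pred hn.
rewrite -subr_ge0 -mulrBl; apply: mulr_le0 => //; by rewrite subr_le0.
Qed.
End Abel.

Section Real.
Variable R : realType.
Variable N : nat.
Implicit Types q : 'I_N -> R.

Definition sq q := [seq q j | j <- enum 'I_N].
Definition Fq q (i : nat) := nth 0 (sq q) i.

Lemma size_sq q : size (sq q) = N.
Proof. by rewrite size_map size_enum_ord. Qed.

Lemma Fq_ord q (j : 'I_N) : Fq q j = q j.
Proof. by rewrite /Fq /sq (nth_map j) ?nth_ord_enum // size_enum_ord. Qed.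

Lemma psum_take q k : (k <= N)%N ->
  \sum_(0 <= i < k) Fq q i = \sum_(y <- take k (sq q)) y.
Proof.
move=> hk; rewrite [RHS](big_nth 0) size_take size_sq.
have -> : (if (k < N)%N then k else N) = k.
  by case: ltnP => // hN; apply/eqP; rewrite eqn_leq hk hN.
rewrite big_mkcond /= [RHS]big_mkcond /=.
by apply: eq_big_nat => i /andP [_ hi]; rewrite nth_take.
Qed.

Let ge_trans : transitive (>=%R : rel R).
Proof. by move=> x y z hyx hzy; exact: le_trans hzy hyx. Qed.
Let ge_total : total (>=%R : rel R).
Proof. by move=> x y; exact: le_total. Qed.

Lemma decr_sorted q : (forall n m : 'I_N, (n <= m)%N -> q m <= q n) ->
  decr q = sq q.
Proof.
move=> hq; apply: sorted_sort => //.
rewrite /sq sorted_map.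
have : sorted (relpre val leq) (enum 'I_N) by rewrite -(sorted_map (f:=val)) val_enum_ord iota_sorted.
apply: sub_sorted => i j /= hij; exact: hq.
Qed.

Lemma psum_le q q1 k : (k <= N)%N -> majorized q q1 ->
  (forall n m : 'I_N, (n <= m)%N -> q1 m <= q1 n) ->
  \sum_(0 <= i < k) Fq q i <= \sum_(0 <= i < k) Fq q1 i.
Proof.
move=> hk [hm _] hq1; rewrite !psum_take // -(decr_sorted q1 hq1).
apply: le_trans (hm k hk).
apply: topk; last exact: sort_sorted.
by rewrite perm_sym perm_sort.
Qed.

Lemma psum_full q : \sum_(0 <= i < N) Fq q i = \sum_(y <- decr q) y.
Proof.
rewrite psum_take // -[X in take X _](size_sq q) take_size.
by apply: perm_big; rewrite perm_sym perm_sort.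
Qed.

Lemma real_main lam q q1 :
  (forall n m : 'I_N, (n <= m)%N -> lam n <= lam m) ->
  (forall n m : 'I_N, (n <= m)%N -> q1 m <= q1 n) ->
  majorized q q1 ->
  \sum_(i < N) lam i * q1 i <= \sum_(i < N) lam i * q i.
Proof.
move=> hl hq1 hm.
rewrite -subr_ge0 -sumrB.
have -> : \sum_(i < N) (lam i * q i - lam i * q1 i) =
          \sum_(0 <= i < N) Fq lam i * (Fq q i - Fq q1 i).
  by rewrite big_mkord; apply: eq_bigr => i _; rewrite !Fq_ord mulrBr.
apply: abel.
- move=> i j /andP [hij hj].
  have hi : (i < N)%N by apply: leq_ltn_trans hj.
  have := Fq_ord lam (Ordinal hi); have := Fq_ord lam (Ordinal hj); rewrite /= => -> ->.
  exact: hl.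
- move=> k hk; rewrite sumrB subr_le0; exact: psum_le.
- by rewrite sumrB !psum_full; case: hm => _ ->; rewrite subrr.
Qed.
End Real.
Section T. Variable R : realType.
Local Notation C := R[i].
Lemma term N (u v : 'rV[C]_N) (U : 'M[C]_N) :
 \tr (ketbra u *m (U *m ketbra v *m U ^t*)) =
   ((Normc.normc ((bra u *m U *m ket v) 0 0))^+2)%:C%C.
Proof.
set z := bra u *m U *m ket v.
have hw : bra v *m U ^t* *m ket u = map_mx Num.conj z^T.
  rewrite /z /bra /ket !trmx_mul !map_mxM trmxK !map_trmx.
  by rewrite -map_mx_comp (map_mx_id (fun x => conjCK x)) mulmxA.
rewrite /ketbra -!mulmxA mxtrace_mulC.
have -> : bra u *m (U *m (ket v *m (bra v *m U ^t*))) *m ket u =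
          z *m (bra v *m U ^t* *m ket u) by rewrite /z !mulmxA.
rewrite hw /mxtrace big_ord1 !mxE big_ord1 !mxE -normCK.
by rewrite rmorphXn.
Qed.
Lemma tr_formula N (lam p : 'I_N -> R) (Xi U : 'M[C]_N) :
 \tr ((\sum_(n < N) (lam n)%:C%C *: ketbra (row n Xi)) *m
      (U *m (\sum_(m < N) (p m)%:C%C *: ketbra (row m Xi)) *m U ^t*)) =
 (\sum_(n < N) lam n * qvec p Xi U n)%:C%C.
Proof.
rewrite mulmx_sumr mulmx_suml mulmx_suml raddf_sum rmorph_sum /=.
apply: eq_bigr => n _.
rewrite -scalemxAl mxtraceZ mulmx_sumr raddf_sum /= rmorphM /qvec rmorph_sum /=.
congr (_ * _); apply: eq_bigr => m _.
by rewrite -(scalemxAr _ U) -scalemxAl -scalemxAr mxtraceZ term [RHS]rmorphM.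
Qed.
End T.
Theorem proposition1 (R : realType) (dO dK : nat)
  (H : 'M[R[i]]_(dO * dK)) (lam : 'I_(dO * dK) -> R) (Xi : 'M[R[i]]_(dO * dK))
  (beta : R) (Psi : 'rV[R[i]]_dO) (U1 : 'M[R[i]]_(dO * dK)) :
  (forall n m : 'I_(dO * dK), (n <= m)%N -> lam n <= lam m) ->
  Xi \is unitarymx ->
  H = \sum_(n < dO * dK) (lam n)%:C%C *: ketbra (row n Xi) ->
  0 < beta ->
  \sum_(i < dO) Psi 0 i * (Psi 0 i)^* = 1 ->
  Umaj Psi Xi U1 ->
  (forall n m : 'I_(dO * dK), (n <= m)%N ->
     qvec (gibbs_p lam beta) Xi U1 m <= qvec (gibbs_p lam beta) Xi U1 n) ->
  (forall U, Umaj Psi Xi U ->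
     majorized (qvec (gibbs_p lam beta) Xi U) (qvec (gibbs_p lam beta) Xi U1)) ->
  forall U, Umaj Psi Xi U ->
    DeltaQ H (gibbs_state lam Xi beta) U1 <= DeltaQ H (gibbs_state lam Xi beta) U.
Proof.
move=> hlam hXi hH hbeta hPsi hU1 hq1 hmaj U hU.
rewrite /DeltaQ hH /gibbs_state !mulmxBr !raddfB /= lerD2r.
rewrite !tr_formula lecR.
exact: (@real_main R (dO * dK) lam _ _ hlam hq1 (hmaj U hU)).
Qed.
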